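(* Let $m\in\mathbb{N}$, let $G^1,\dots,G^m$ be compatible nontrivial monotonic hypergraph sequences, and let $1\le t<m$. Then for all $p,q\in\mathbb{R}_{>0}$, $$\mathrm{cr}((G^1,\dots,G^m),p+q)\le\max\big(\mathrm{cr}((G^1,\dots,G^t),p),\ \mathrm{cr}((G^{t+1},\dots,G^m),q)\big).$$
   Context: A finite hypergraph $G=(V,E)$ has finite vertex set $V$ and hyperedge set $E\subseteq\mathcal P(V)$. A sequence $(G_n)_{n\in\mathbb{N}}$ of finite hypergraphs is nontrivial monotonic if $V(G_n)\subseteq V(G_{n+1})$, $E(G_n)\subseteq E(G_{n+1})$ for all $n$, $V(G_1)\ne\emptyset$ and $\emptyset\notin E(G_n)$ for all $n$. Sequences $G^1,\dots,G^m$ are compatible if $V(G^1_n)=\dots=V(G^m_n)$ for all $n$. A set $S$ of vertices is independent in a hypergraph if it contains no hyperedge. For compatible sequences $G^1,\dots,G^r$ and $q\in\mathbb{R}_{>0}$, $\mathrm{cr}((G^1,\dots,G^r),q)\in\mathbb{N}\cup\{+\infty\}$ is the infimum of all $n\in\mathbb{N}$ such that for all $n'\ge n$ and all $r$-tuples $(S_1,\dots,S_r)$ of pairwise disjoint sets with $S_i$ independent in $G^i_{n'}$ we have $\frac{|S_1|+\dots+|S_r|}{|V(G^1_{n'})|}<q$ (infimum of the empty set is $+\infty$). *)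

(* Defs.v *)
From HB Require Import structures.
From mathcomp Require Import all_boot all_order all_algebra.
From mathcomp Require Import finmap.
From mathcomp Require Import boolp reals.
Set Implicit Arguments. Unset Strict Implicit. Unset Printing Implicit Defensive.
Import Order.TTheory GRing.Theory Num.Theory.
Local Open Scope fset_scope.

Record hypergraph (T : choiceType) := Hypergraph {
  hV : {fset T};
  hE : {fset {fset T}};
  hE_sub : forall e, e \in hE -> e `<=` hV
}.

Definition empty_hypergraph (T : choiceType) : hypergraph T :=
  @Hypergraph T fset0 fset0 (fun e (H : e \in (fset0 : {fset {fset T}})) =>
     False_ind _ (ltac:(by rewrite in_fset0 in H))).

(* Sequences are indexed by ℕ = {1,2,...}: only the values at n >= 1 matter. *)
Definition hseq (T : choiceType) := nat -> hypergraph T.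

Definition hseq_dflt (T : choiceType) : hseq T := fun _ => empty_hypergraph T.

Definition nontrivial_monotonic (T : choiceType) (G : hseq T) : Prop :=
  [/\ forall n, (1 <= n)%N -> hV (G n) `<=` hV (G n.+1),
      forall n, (1 <= n)%N -> hE (G n) `<=` hE (G n.+1),
      hV (G 1%N) != fset0
    & forall n, (1 <= n)%N -> fset0 \notin hE (G n)].

Definition compatible (T : choiceType) (Gs : seq (hseq T)) : Prop :=
  forall n, (1 <= n)%N -> forall i j, (i < size Gs)%N -> (j < size Gs)%N ->
    hV (nth (@hseq_dflt T) Gs i n) = hV (nth (@hseq_dflt T) Gs j n).

Definition independent (T : choiceType) (G : hypergraph T) (S : {fset T}) : Prop :=
  S `<=` hV G /\ forall e, e \in hE G -> ~~ (e `<=` S).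


Definition cr_good (R : realType) (T : choiceType) (Gs : seq (hseq T)) (q : R)
    (n : nat) : Prop :=
  (1 <= n)%N /\
  forall n', (n <= n')%N -> forall S : nat -> {fset T},
    (forall i j, (i < size Gs)%N -> (j < size Gs)%N -> i != j ->
        S i `&` S j = fset0) ->
    (forall i, (i < size Gs)%N -> independent (nth (@hseq_dflt T) Gs i n') (S i)) ->
    ((\sum_(i < size Gs) #|` S i|)%:R / (#|` hV (nth (@hseq_dflt T) Gs 0 n')|)%:R
       < q)%R.

(* ℕ ∪ {+∞} as option nat, None = +∞ *)
Definition cr (R : realType) (T : choiceType) (Gs : seq (hseq T)) (q : R)
    : option nat :=
  match pselect (exists n, cr_good Gs q n) with
  | left H => Some (@ex_minn (fun n => `[< cr_good Gs q n >]%bool)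
                      (let: ex_intro n Hn := H in
                       ex_intro _ n (asboolT Hn)))
  | right _ => None
  end.

Definition enat_le (a b : option nat) : Prop :=
  match a, b with
  | _, None => True
  | None, Some _ => False
  | Some x, Some y => (x <= y)%N
  end.

Definition enat_max (a b : option nat) : option nat :=
  match a, b with
  | Some x, Some y => Some (maxn x y)
  | _, _ => None
  end.

(* Main.v *)
Require Import Defs.
From HB Require Import structures.
From mathcomp Require Import all_boot all_order all_algebra.
From mathcomp Require Import finmap.
From mathcomp Require Import boolp reals.
Import Order.TTheory GRing.Theory Num.Theory.

Lemma cr_le (R : realType) (T : choiceType) (Gs : seq (hseq T)) (q : R) n :
  cr_good Gs q n -> enat_le (cr Gs q) (Some n).
Proof.
move=> Hn; rewrite /cr; case: pselect => [H|H]; last by exfalso; apply: H; exists n.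
case: ex_minnP => x _ Hmin /=; apply: Hmin; exact/asboolP.
Qed.

Lemma cr_some (R : realType) (T : choiceType) (Gs : seq (hseq T)) (q : R) a :
  cr Gs q = Some a -> cr_good Gs q a.
Proof.
rewrite /cr; case: pselect => [H|H] // [<-].
case: ex_minnP => x Hx _; exact/asboolP.
Qed.

Theorem lemma3 (R : realType) (T : choiceType) (m : nat) (Gs : seq (hseq T))
  (t : nat) (p q : R) :
  size Gs = m ->
  (forall i, (i < m)%N -> nontrivial_monotonic (nth (@hseq_dflt T) Gs i)) ->
  compatible Gs ->
  (1 <= t)%N -> (t < m)%N ->
  (0 < p)%R -> (0 < q)%R ->
  enat_le (cr Gs (p + q)%R) (enat_max (cr (take t Gs) p) (cr (drop t Gs) q)).
Proof.
move=> Hsz _ Hcomp Ht Htm _ _.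
case Ea: (cr (take t Gs) p) => [a|]; last by case: (cr Gs _).
case Eb: (cr (drop t Gs) q) => [b|]; last by case: (cr Gs _).
have [Ha1 Ha] := @cr_some _ _ _ _ _ Ea; have [Hb1 Hb] := @cr_some _ _ _ _ _ Eb.
apply: (@cr_le R); split; first by rewrite leq_max Ha1.
move=> n' Hn' S Hdisj Hind.
have Han : (a <= n')%N by apply: leq_trans Hn'; rewrite leq_max leqnn.
have Hbn : (b <= n')%N by apply: leq_trans Hn'; rewrite leq_max leqnn orbT.
have szt : size (take t Gs) = t by rewrite size_take Hsz Htm.
have szd : size (drop t Gs) = (m - t)%N by rewrite size_drop Hsz.
have H1 := Ha n' Han S.
rewrite szt in H1.
have {H1} H1 : ((\sum_(i < t) #|` S i|)%:R / (#|` hV (nth (@hseq_dflt T) Gs 0 n')|)%:R < p)%R.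
  rewrite -(nth_take _ Ht).
  apply: H1.
    move=> i j Hi Hj; apply: Hdisj; rewrite Hsz; apply: ltn_trans Htm => //.
  move=> i Hi; rewrite nth_take //; apply: Hind; rewrite Hsz; exact: ltn_trans Htm.
have H2 := Hb n' Hbn (fun i => S (t + i)%N).
rewrite szd in H2.
have {H2} H2 : ((\sum_(i < m - t) #|` S (t + i)%N|)%:R / (#|` hV (nth (@hseq_dflt T) Gs 0 n')|)%:R < q)%R.
  have <- : hV (nth (@hseq_dflt T) Gs t n') = hV (nth (@hseq_dflt T) Gs 0 n').
    apply: Hcomp; rewrite ?Hsz //; [exact: leq_trans Hb1 Hbn | exact: leq_ltn_trans Htm].
  rewrite -[t in nth _ Gs t]addn0 -nth_drop.
  apply: H2.
    move=> i j Hi Hj Hij; apply: Hdisj; rewrite ?Hsz ?eqn_add2l //; rewrite -ltn_subRL //.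
  move=> i Hi; rewrite nth_drop; apply: Hind; rewrite Hsz -ltn_subRL //.
rewrite Hsz.
have -> : (\sum_(i < m) #|` S i| = \sum_(i < t) #|` S i| + \sum_(i < m - t) #|` S (t + i)%N|)%N.
  rewrite -!(big_mkord xpredT (fun i => #|` S i|)) -(big_mkord xpredT (fun i => #|` S (t+i)%N|)).
  rewrite (big_cat_nat _ (n := t)) //=; last exact: ltnW.
  by congr (_ + _)%N; rewrite -{1}[t]add0n big_addn; apply: eq_bigr => i _; rewrite addnC.
rewrite natrD mulrDl; exact: ltrD.
Qed.
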